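(* Let $m,n\ge 1$ and let $U=\begin{pmatrix}1&1\\0&1\end{pmatrix}$, $V=\begin{pmatrix}1&0\\1&1\end{pmatrix}$ (representing, under an identification $\mathrm{Mod}(T^2)\cong\mathrm{SL}(2,\mathbb{Z})$, the mapping classes $\tau_a^{-1}$ and $\tau_b$, where $\tau_a,\tau_b$ are Dehn twists about simple closed curves $a,b$ on the torus with geometric intersection number $1$). Among all words consisting of exactly $m$ letters $U$ and $n$ letters $V$ in any order, the word $U^mV^n$ (i.e. $\tau_a^{-m}\tau_b^n$, up to cyclic permutation) has the smallest stable translation length on the Farey graph $\mathcal{F}$. Moreover, $l_{\mathcal{C}}(U^mV^n)\le 2$.
   Context: The Farey graph $\mathcal{F}$ (the curve graph of the torus) has vertex set $\mathbb{Q}\cup\{\infty\}$, $p/q$ and $r/s$ adjacent iff $|ps-qr|=1$, with path metric $d_{\mathcal{C}}$ of unit edge lengths; $\begin{pmatrix}a&b\\c&d\end{pmatrix}\in\mathrm{SL}(2,\mathbb{Z})$ acts by $p/q\mapsto (ap+bq)/(cp+dq)$. The stable translation length of $g$ is $l_{\mathcal{C}}(g)=\liminf_{j\to\infty} d_{\mathcal{C}}(v,g^j(v))/j$ for any vertex $v$. Every word in the letters $U,V$ containing both letters is an Anosov element (absolute trace $>2$). *)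

(* Defs.v *)
From Stdlib Require Import ZArith Reals List ClassicalEpsilon.
Open Scope Z_scope.

Record mat2 := M2 { ma : Z; mb : Z; mc : Z; md : Z }.

Definition mmul (x y : mat2) : mat2 :=
  M2 (ma x * ma y + mb x * mc y) (ma x * mb y + mb x * md y)
     (mc x * ma y + md x * mc y) (mc x * mb y + md x * md y).

Definition mid : mat2 := M2 1 0 0 1.

Fixpoint mpow (g : mat2) (j : nat) : mat2 :=
  match j with O => mid | S k => mmul g (mpow g k) end.

Definition matU : mat2 := M2 1 1 0 1.
Definition matV : mat2 := M2 1 0 1 1.

Definition letter (b : bool) : mat2 := if b then matU else matV.
Fixpoint word_mat (w : list bool) : mat2 :=
  match w with nil => mid | b :: w' => mmul (letter b) (word_mat w') end.

Definition numU (w : list bool) : nat := count_occ Bool.bool_dec w true.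
Definition numV (w : list bool) : nat := count_occ Bool.bool_dec w false.

Definition UmVn (m n : nat) : list bool := repeat true m ++ repeat false n.

(** Farey graph. A vertex p/q of Q ∪ {∞} is represented by a pair (p,q) of
    coprime integers, the pairs (p,q) and (-p,-q) representing the same vertex
    (∞ = (1,0)). *)
Definition act (g : mat2) (v : Z * Z) : Z * Z :=
  (ma g * fst v + mb g * snd v, mc g * fst v + md g * snd v).

Definition same_vertex (v w : Z * Z) : Prop :=
  w = v \/ w = (- fst v, - snd v).

Definition farey_adj (v w : Z * Z) : Prop :=
  Z.abs (fst v * snd w - snd v * fst w) = 1.

Inductive farey_path : nat -> Z * Z -> Z * Z -> Prop :=
| fp_nil : forall v w, same_vertex v w -> farey_path O v w
| fp_cons : forall n u v w, farey_adj u v -> farey_path n v w ->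
    farey_path (S n) u w.

Definition farey_dist (v w : Z * Z) : nat :=
  epsilon (inhabits O)
    (fun n => farey_path n v w /\ forall k, farey_path k v w -> (n <= k)%nat).

Open Scope R_scope.

Definition is_liminf (u : nat -> R) (l : R) : Prop :=
  (forall eps, 0 < eps -> exists N, forall j, (N <= j)%nat -> l - eps < u j) /\
  (forall eps, 0 < eps -> forall N, exists j, (N <= j)%nat /\ u j < l + eps).

Definition liminf (u : nat -> R) : R := epsilon (inhabits 0) (is_liminf u).

Definition infty : Z * Z := (1%Z, 0%Z).

Definition stable_length (g : mat2) : R :=
  liminf (fun j => INR (farey_dist infty (act (mpow g j) infty)) / INR j).

(* Main.v *)
Require Import Defs.
From Stdlib Require Import ZArith Reals List.
Open Scope R_scope.
From Stdlib Require Import Lia Psatz ClassicalEpsilon Classical Bool.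
From Coquelicot Require Rbar Lim_seq.

Open Scope Z_scope.

Definition det2 (u v : Z * Z) : Z := fst u * snd v - snd u * fst v.
Definition detM (A : mat2) : Z := ma A * md A - mb A * mc A.
Definition adj (A : mat2) : mat2 := M2 (md A) (- mb A) (- mc A) (ma A).
Definition e1 : Z * Z := (1, 0).
Definition e2 : Z * Z := (0, 1).
Definition negv (v : Z * Z) : Z * Z := (- fst v, - snd v).
Ltac mm := repeat match goal with | A : mat2 |- _ => let a:=fresh "a" in let b:=fresh "b" in let c:=fresh "c" in let d:=fresh "d" in destruct A as [a b c d] | v : (Z*Z)%type |- _ => let x:=fresh "x" in let y:=fresh "y" in destruct v as [x y] end; unfold act, mmul, mid, det2, detM, adj, negv in *; cbn -[Z.mul Z.add Z.sub Z.opp] in *.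

Lemma act_mmul A B v : act (mmul A B) v = act A (act B v).
Proof. mm; f_equal; ring. Qed.

Lemma act_mid v : act mid v = v.
Proof. mm; f_equal; ring. Qed.

Lemma det2_act A u v : det2 (act A u) (act A v) = detM A * det2 u v.
Proof. mm; ring. Qed.

Lemma act_neg A v : act A (negv v) = negv (act A v).
Proof. mm; f_equal; ring. Qed.

Lemma mmul_assoc A B C : mmul A (mmul B C) = mmul (mmul A B) C.
Proof. mm; f_equal; ring. Qed.

Lemma mmul_mid_l A : mmul mid A = A.
Proof. mm; f_equal; ring. Qed.
Lemma mmul_mid_r A : mmul A mid = A.
Proof. mm; f_equal; ring. Qed.

Lemma adj_l A : detM A = 1 -> mmul (adj A) A = mid.
Proof. mm; intros H; f_equal; lia. Qed.
Lemma adj_r A : detM A = 1 -> mmul A (adj A) = mid.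
Proof. mm; intros H; f_equal; lia. Qed.

Lemma detM_mmul A B : detM (mmul A B) = detM A * detM B.
Proof. mm; ring. Qed.
Lemma detM_adj A : detM (adj A) = detM A.
Proof. mm; ring. Qed.

Lemma detM_mpow g k : detM g = 1 -> detM (mpow g k) = 1.
Proof. intros H; induction k; simpl. reflexivity. rewrite detM_mmul, H, IHk; ring. Qed.

Lemma act_mpow_S g k v : act (mpow g (S k)) v = act g (act (mpow g k) v).
Proof. simpl. apply act_mmul. Qed.

Lemma mpow_comm g k : mmul g (mpow g k) = mmul (mpow g k) g.
Proof. induction k; simpl. rewrite mmul_mid_l, mmul_mid_r; auto.
  rewrite IHk at 1. rewrite !mmul_assoc. reflexivity. Qed.

Lemma same_vertex_neg v : same_vertex v (negv v).
Proof. right. reflexivity. Qed.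

Lemma negv_negv v : negv (negv v) = v.
Proof. mm; f_equal; ring. Qed.

Lemma adj_neg_l u v : farey_adj u v -> farey_adj (negv u) v.
Proof. unfold farey_adj; mm. intros H; rewrite <- H.
  rewrite <- Z.abs_opp. f_equal. ring. Qed.

Lemma path_neg n v w : farey_path n v w -> farey_path n (negv v) w.
Proof.
  intros H; inversion H; subst.
  - apply fp_nil. destruct H0 as [H0|H0]; subst.
    + right. destruct v; unfold negv; cbn -[Z.opp]; f_equal; ring.
    + left. reflexivity.
  - eapply fp_cons. apply adj_neg_l; eauto. auto.
Qed.

Lemma path_app n k u v w : farey_path n u v -> farey_path k v w -> farey_path (n + k) u w.
Proof.
  intros H; revert w; induction H; intros x Hk; simpl.
  - destruct H as [H|H]; subst. auto.
    replace v with (negv (negv v)) by apply negv_negv. apply path_neg. exact Hk.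
  - eapply fp_cons; eauto.
Qed.

Lemma path_act A n v w : Z.abs (detM A) = 1 -> farey_path n v w ->
  farey_path n (act A v) (act A w).
Proof.
  intros HA H; induction H.
  - apply fp_nil. destruct H as [H|H]; subst. left; auto.
    right. change (act A (negv v) = negv (act A v)). apply act_neg.
  - eapply fp_cons; eauto. unfold farey_adj in *.
    fold (det2 u v) in H. change (Z.abs (det2 (act A u) (act A v)) = 1).
    rewrite det2_act, Z.abs_mul, HA, H. reflexivity.
Qed.

Lemma least_exists (P : nat -> Prop) : (exists n, P n) -> exists n, P n /\ forall k, P k -> (n <= k)%nat.
Proof.
  intros [n Hn]. revert Hn. induction n as [n IH] using (well_founded_induction lt_wf).
  intros Hn. destruct (classic (exists k, (k < n)%nat /\ P k)) as [[k [Hk1 Hk2]]|Hno].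
  - eapply IH; eauto.
  - exists n; split; auto. intros k Hk. destruct (Nat.le_gt_cases n k); auto.
    exfalso; apply Hno; eauto.
Qed.

Lemma dist_spec L v w : farey_path L v w ->
  farey_path (farey_dist v w) v w /\ (farey_dist v w <= L)%nat.
Proof.
  intros H. unfold farey_dist.
  assert (He : exists n, farey_path n v w /\ forall k, farey_path k v w -> (n <= k)%nat).
  { apply least_exists; eauto. }
  pose proof (epsilon_spec (inhabits O) _ He) as [H1 H2].
  split; auto.
Qed.

Open Scope Z_scope.

Lemma word_mat_app x y : word_mat (x ++ y) = mmul (word_mat x) (word_mat y).
Proof. induction x; simpl. rewrite mmul_mid_l; auto. rewrite IHx, mmul_assoc; auto. Qed.

Lemma detM_word w : detM (word_mat w) = 1.
Proof. induction w; simpl. reflexivity. rewrite detM_mmul, IHw. destruct a; reflexivity. Qed.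

Definition nonnegM (A : mat2) : Prop := 0 <= mb A /\ 0 <= mc A /\ 1 <= ma A /\ 1 <= md A.
Definition posM (A : mat2) : Prop := 1 <= ma A /\ 1 <= mb A /\ 1 <= mc A /\ 1 <= md A.

Lemma nonneg_word w : nonnegM (word_mat w).
Proof. induction w; simpl. unfold nonnegM; simpl; lia.
  destruct (word_mat w) as [a1 b1 c1 d1]; unfold nonnegM in *; simpl in *.
  destruct a; unfold mmul, letter, matU, matV; cbn -[Z.mul Z.add]; lia. Qed.

Lemma word_b w : In true w -> 1 <= mb (word_mat w).
Proof. induction w; simpl. tauto. pose proof (nonneg_word w) as N. intros [H|H].
  - subst. destruct (word_mat w) as [a1 b1 c1 d1]; unfold nonnegM in *; unfold mmul, letter, matU, matV; cbn -[Z.mul Z.add] in *; lia.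
  - specialize (IHw H). destruct (word_mat w) as [a1 b1 c1 d1]; unfold nonnegM in *; simpl in *.
    destruct a; unfold mmul, letter, matU, matV; cbn -[Z.mul Z.add]; lia. Qed.

Lemma word_c w : In false w -> 1 <= mc (word_mat w).
Proof. induction w; simpl. tauto. pose proof (nonneg_word w) as N. intros [H|H].
  - subst. destruct (word_mat w) as [a1 b1 c1 d1]; unfold nonnegM in *; unfold mmul, letter, matU, matV; cbn -[Z.mul Z.add] in *; lia.
  - specialize (IHw H). destruct (word_mat w) as [a1 b1 c1 d1]; unfold nonnegM in *; simpl in *.
    destruct a; unfold mmul, letter, matU, matV; cbn -[Z.mul Z.add]; lia. Qed.

Lemma pos_word w : In true w -> In false w -> posM (word_mat w).
Proof. intros H1 H2. pose proof (nonneg_word w). pose proof (word_b w H1).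
  pose proof (word_c w H2). unfold nonnegM, posM in *; lia. Qed.

Lemma pos2 A B : posM A -> posM B ->
  let C := mmul A B in 2 <= ma C /\ 2 <= mb C /\ 2 <= mc C /\ 2 <= md C.
Proof. destruct A as [a b c d], B as [a' b' c' d']; unfold posM, mmul; cbn -[Z.mul Z.add]; nia. Qed.

Lemma path_letter b : exists k, (k <= 1)%nat /\ farey_path k e1 (act (letter b) e1).
Proof. destruct b.
  - exists O. split. lia. apply fp_nil. left. reflexivity.
  - exists 1%nat. split. lia. eapply fp_cons. 2: apply fp_nil; left; reflexivity.
    unfold farey_adj; simpl. reflexivity.
Qed.

Lemma path_word w : exists L, (L <= length w)%nat /\ farey_path L e1 (act (word_mat w) e1).
Proof.
  induction w as [|b w IH]; simpl.
  - exists O. split. lia. apply fp_nil. left. rewrite act_mid. reflexivity.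
  - destruct IH as [L [HL HP]].
    assert (Hd : Z.abs (detM (letter b)) = 1) by (destruct b; reflexivity).
    pose proof (path_act (letter b) _ _ _ Hd HP) as HP'.
    rewrite <- act_mmul in HP'.
    destruct (path_letter b) as [k [Hk Pk]].
    exists (k + L)%nat. split. lia. eapply path_app; eauto.
Qed.

Lemma path_pow g L : Z.abs (detM g) = 1 -> farey_path L e1 (act g e1) ->
  forall N, farey_path (N * L) e1 (act (mpow g N) e1).
Proof.
  intros Hg HP N; induction N; simpl.
  - apply fp_nil. left. rewrite act_mid; reflexivity.
  - eapply path_app. exact HP. rewrite act_mmul. apply path_act; auto.
Qed.

Open Scope Z_scope.

Definition sg (u : Z * Z) : Z := fst u * snd u.
Definition tt (u : Z * Z) : Z := if 0 <? sg u then 2 else if sg u =? 0 then 1 else 0.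

Lemma tt_range u : 0 <= tt u <= 2.
Proof. unfold tt; destruct (0 <? sg u); [lia|]; destruct (sg u =? 0); lia. Qed.
Lemma tt2 u : tt u = 2 <-> 0 < sg u.
Proof. unfold tt. destruct (0 <? sg u) eqn:E; [apply Z.ltb_lt in E|apply Z.ltb_ge in E];
  [lia|]; destruct (sg u =? 0) eqn:F; [apply Z.eqb_eq in F|apply Z.eqb_neq in F]; lia. Qed.
Lemma tt1 u : tt u = 1 <-> sg u = 0.
Proof. unfold tt. destruct (0 <? sg u) eqn:E; [apply Z.ltb_lt in E|apply Z.ltb_ge in E];
  [lia|]; destruct (sg u =? 0) eqn:F; [apply Z.eqb_eq in F|apply Z.eqb_neq in F]; lia. Qed.
Lemma tt0 u : tt u = 0 <-> sg u < 0.
Proof. unfold tt. destruct (0 <? sg u) eqn:E; [apply Z.ltb_lt in E|apply Z.ltb_ge in E];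
  [lia|]; destruct (sg u =? 0) eqn:F; [apply Z.eqb_eq in F|apply Z.eqb_neq in F]; lia. Qed.

Lemma tt_cases u : (tt u = 2 /\ 0 < sg u) \/ (tt u = 1 /\ sg u = 0) \/ (tt u = 0 /\ sg u < 0).
Proof. destruct (Z_lt_le_dec 0 (sg u)). left; split; auto; apply tt2; auto.
  destruct (Z.eq_dec (sg u) 0). right; left; split; auto; apply tt1; auto.
  right; right; split; [apply tt0|]; lia. Qed.

Lemma tt_neg u : tt (negv u) = tt u.
Proof. unfold tt, sg, negv; destruct u; simpl. replace (- z * - z0) with (z * z0) by ring. auto. Qed.

Lemma act_nonzero A v : detM A = 1 -> v <> (0,0) -> act A v <> (0,0).
Proof. intros HA Hv E. apply Hv. rewrite <- (act_mid v), <- (adj_l A HA), act_mmul, E.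
  unfold act; simpl. f_equal; ring. Qed.

Definition Inv (K1 K2 x y D : Z) : Prop :=
    ((x = 2 \/ y = 2 \/ (x = 1 /\ y = 1)) -> D = 0) /\
    (x = 1 /\ y = 0 -> 0 <= D <= K1) /\
    (x = 0 /\ y = 1 -> - K1 <= D <= 0) /\
    Z.abs D <= K2.
Lemma step (s : bool) x y x' y' D :
  0 <= x <= 2 -> 0 <= y <= 2 -> 0 <= x' <= 2 -> 0 <= y' <= 2 ->
  Z.abs (x - y) <= 1 -> Z.abs (x' - y') <= 1 ->
  (1 <= x' -> x = 2) -> (1 <= y' -> y = 2) ->
  (s = true -> ~ (x = 1 /\ y' = 1) /\ ~ (y = 1 /\ x' = 1)) ->
  Inv (if s then 0 else 1) (if s then 1 else 2) x y D ->
  Inv (if s then 0 else 1) (if s then 1 else 2) x' y' (D + x - y).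
Proof.
  intros Hx Hy Hx' Hy' H1 H2 H3 H4 H5 [I1 [I2 [I3 I4]]].
  assert (x = 0 \/ x = 1 \/ x = 2) as Ex by lia.
  assert (y = 0 \/ y = 1 \/ y = 2) as Ey by lia.
  assert (x' = 0 \/ x' = 1 \/ x' = 2) as Ex' by lia.
  assert (y' = 0 \/ y' = 1 \/ y' = 2) as Ey' by lia.
  unfold Inv.
  destruct s; [specialize (H5 eq_refl)|clear H5];
  destruct Ex as [ -> | [ -> | -> ] ]; destruct Ey as [ -> | [ -> | -> ] ];
  destruct Ex' as [ -> | [ -> | -> ] ]; destruct Ey' as [ -> | [ -> | -> ] ];
  try (exfalso; lia);
  try (exfalso; specialize (H3 ltac:(lia)); lia);
  try (exfalso; specialize (H4 ltac:(lia)); lia);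
  try (exfalso; apply H5; tauto);
  try (exfalso; apply H5; lia);
  try (specialize (I1 ltac:(tauto)));
  try (specialize (I2 ltac:(tauto)));
  try (specialize (I3 ltac:(tauto)));
  clear H3 H4; try clear H5;
  repeat split; intros; try lia; intuition lia.
Qed.

Section Pot.
Variable M : mat2.
Hypothesis HM : posM M.
Hypothesis HdM : detM M = 1.
Let Mi := adj M.

Lemma MMi v : act M (act Mi v) = v.
Proof. rewrite <- act_mmul. unfold Mi. rewrite adj_r by auto. apply act_mid. Qed.
Lemma MiM v : act Mi (act M v) = v.
Proof. rewrite <- act_mmul. unfold Mi. rewrite adj_l by auto. apply act_mid. Qed.

Lemma F1 v : 0 <= sg v -> v <> (0,0) -> 0 < sg (act M v).
Proof.
  destruct M as [a b c d]; unfold posM in HM; simpl in HM. destruct v as [x y].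
  unfold sg, act; simpl. intros H1 H2.
  assert (x <> 0 \/ y <> 0) by (destruct (Z.eq_dec x 0), (Z.eq_dec y 0); subst; auto).
  destruct (Z_le_gt_dec 0 x), (Z_le_gt_dec 0 y); nia.
Qed.

Lemma S2 a b : Z.abs (det2 a b) = 1 -> 0 < sg a -> sg b < 0 -> False.
Proof.
  destruct a as [x y], b as [u v]; unfold det2, sg; simpl. intros H1 H2 H3.
  destruct (Z_le_gt_dec 0 x), (Z_le_gt_dec 0 u); nia.
Qed.

Lemma no_unit e k : 2 <= e -> Z.abs (e * k) = 1 -> False.
Proof. intros H1 H2. destruct (Z_le_gt_dec k 0); [destruct (Z.eq_dec k 0)|]; subst; nia. Qed.

Lemma unit_abs x v : Z.abs (x * v) = 1 -> x = 1 \/ x = -1.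
Proof. intros H. destruct (Z.abs_spec (x * v)) as [[_ E]|[_ E]]; rewrite E in H.
  - apply Z.mul_eq_1 in H; lia.
  - assert ((-x) * v = 1) by lia. apply Z.mul_eq_1 in H0; lia. Qed.

Lemma S3' a b : (2 <= ma M /\ 2 <= mb M /\ 2 <= mc M /\ 2 <= md M) ->
  sg (act M a) = 0 -> sg b = 0 -> Z.abs (det2 a b) = 1 -> False.
Proof.
  pose proof HdM as HD.
  destruct M as [p q r s]; unfold detM in HD; simpl in *.
  destruct a as [x y], b as [u v]; unfold det2, sg, act; simpl.
  intros [H1 [H2 [H3 H4]]] Ha Hb Hd.
  apply Z.mul_eq_0 in Ha. apply Z.mul_eq_0 in Hb.
  destruct Hb as [Hb|Hb]; subst.
  - assert (Hx : x = 1 \/ x = -1) by (apply (unit_abs x v); rewrite <- Hd; f_equal; ring).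
    destruct Hx as [Hx|Hx]; subst; destruct Ha as [Ha|Ha].
    + apply (no_unit q (y * s + r)); auto. replace (q * (y * s + r)) with (-(p * s - q * r)) by ((replace p with (- q * y) by lia); ring). rewrite HD; reflexivity.
    + apply (no_unit s (p + q * y)); auto. replace (s * (p + q * y)) with ((p * s - q * r)) by ((replace r with (- s * y) by lia); ring). rewrite HD; reflexivity.
    + apply (no_unit q (y * s - r)); auto. replace (q * (y * s - r)) with ((p * s - q * r)) by ((replace p with (q * y) by lia); ring). rewrite HD; reflexivity.
    + apply (no_unit s (p - q * y)); auto. replace (s * (p - q * y)) with ((p * s - q * r)) by ((replace r with (s * y) by lia); ring). rewrite HD; reflexivity.
  - assert (Hy : y = 1 \/ y = -1) by (apply (unit_abs y u); rewrite <- Hd, <- Z.abs_opp; f_equal; ring).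
    destruct Hy as [Hy|Hy]; subst; destruct Ha as [Ha|Ha].
    + apply (no_unit p (s + r * x)); auto. replace (p * (s + r * x)) with ((p * s - q * r)) by ((replace q with (- p * x) by lia); ring). rewrite HD; reflexivity.
    + apply (no_unit r (- p * x - q)); auto. replace (r * (- p * x - q)) with ((p * s - q * r)) by ((replace s with (- r * x) by lia); ring). rewrite HD; reflexivity.
    + apply (no_unit p (s - r * x)); auto. replace (p * (s - r * x)) with ((p * s - q * r)) by ((replace q with (p * x) by lia); ring). rewrite HD; reflexivity.
    + apply (no_unit r (p * x - q)); auto. replace (r * (p * x - q)) with ((p * s - q * r)) by ((replace s with (r * x) by lia); ring). rewrite HD; reflexivity.
Qed.

Definition T (k : nat) (u : Z * Z) : Z := tt (act (mpow Mi k) u).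
Fixpoint phi (N : nat) (u : Z * Z) : Z :=
  match N with O => 0 | S N' => phi N' u + T N' u end.

Lemma detMi : detM Mi = 1.
Proof. unfold Mi. rewrite detM_adj. auto. Qed.

Lemma det_pow k u v : det2 (act (mpow Mi k) u) (act (mpow Mi k) v) = det2 u v.
Proof. rewrite det2_act, detM_mpow by apply detMi. ring. Qed.

Lemma nz_of_det u v : Z.abs (det2 u v) = 1 -> u <> (0,0).
Proof. intros H E; subst. unfold det2 in H; simpl in H. lia. Qed.

Lemma T_range k u : 0 <= T k u <= 2.
Proof. apply tt_range. Qed.

Lemma T_adj k u v : Z.abs (det2 u v) = 1 -> Z.abs (T k u - T k v) <= 1.
Proof.
  intros H. rewrite <- (det_pow k) in H. unfold T.
  set (a := act (mpow Mi k) u) in *. set (b := act (mpow Mi k) v) in *.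
  assert (H' : Z.abs (det2 b a) = 1) by (rewrite <- Z.abs_opp; replace (- det2 b a) with (det2 a b) by (unfold det2; ring); auto).
  destruct (tt_cases a) as [[A1 A2]|[[A1 A2]|[A1 A2]]];
  destruct (tt_cases b) as [[B1 B2]|[[B1 B2]|[B1 B2]]]; rewrite A1, B1; try lia;
  exfalso; first [exact (S2 a b H A2 B2) | exact (S2 b a H' B2 A2)].
Qed.

Lemma T_shape k u : u <> (0,0) -> 1 <= T (S k) u -> T k u = 2.
Proof.
  intros Hu H. unfold T in *. rewrite act_mpow_S in H.
  apply tt2. rewrite <- (MMi (act (mpow Mi k) u)).
  apply F1.
  - destruct (Z.eq_dec (tt (act Mi (act (mpow Mi k) u))) 0) as [E|E].
    rewrite E in H; lia. pose proof (tt_range (act Mi (act (mpow Mi k) u))).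
    destruct (Z.eq_dec (tt (act Mi (act (mpow Mi k) u))) 1) as [E1|E1].
    apply tt1 in E1; lia. assert (tt (act Mi (act (mpow Mi k) u)) = 2) by lia. apply tt2 in H1; lia.
  - rewrite <- act_mpow_S. apply act_nonzero; auto. apply detM_mpow, detMi.
Qed.

Lemma T_strong k u v : (2 <= ma M /\ 2 <= mb M /\ 2 <= mc M /\ 2 <= md M) ->
  Z.abs (det2 u v) = 1 -> ~ (T k u = 1 /\ T (S k) v = 1).
Proof.
  intros H2 H [Ha Hb]. unfold T in *. rewrite act_mpow_S in Hb.
  apply tt1 in Ha; apply tt1 in Hb.
  rewrite <- (det_pow k) in H.
  apply (S3' (act Mi (act (mpow Mi k) u)) (act Mi (act (mpow Mi k) v)) H2).
  - rewrite MMi. auto.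
  - auto.
  - rewrite det2_act, detMi. lia.
Qed.

Lemma phi_lip (strong : bool) u v :
  (strong = true -> 2 <= ma M /\ 2 <= mb M /\ 2 <= mc M /\ 2 <= md M) ->
  Z.abs (det2 u v) = 1 -> forall N,
  Z.abs (phi N u - phi N v) <= (if strong then 1 else 2).
Proof.
  intros Hs H.
  assert (Hu : u <> (0,0)) by (eapply nz_of_det; eauto).
  assert (Hv : v <> (0,0)).
  { apply (nz_of_det v u). rewrite <- Z.abs_opp. replace (- det2 v u) with (det2 u v) by (unfold det2; ring). auto. }
  assert (H' : Z.abs (det2 v u) = 1) by (rewrite <- Z.abs_opp; replace (- det2 v u) with (det2 u v) by (unfold det2; ring); auto).
  assert (Inv0 : forall N, Inv (if strong then 0 else 1) (if strong then 1 else 2) (T N u) (T N v) (phi N u - phi N v)).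
  { induction N as [|N IH].
    - simpl. unfold Inv; destruct strong; lia.
    - replace (phi (S N) u - phi (S N) v) with ((phi N u - phi N v) + T N u - T N v) by (simpl; ring).
      apply step; auto using T_range, T_adj, T_shape.
      intros E. split; apply T_strong; auto. }
  intros N. destruct (Inv0 N) as [_ [_ [_ X]]]. exact X.
Qed.

Lemma phi_neg N u : phi N (negv u) = phi N u.
Proof. induction N; simpl; auto. rewrite IHN. unfold T. rewrite act_neg, tt_neg. auto. Qed.

Lemma phi_path (strong : bool) :
  (strong = true -> 2 <= ma M /\ 2 <= mb M /\ 2 <= mc M /\ 2 <= md M) ->
  forall L u v, farey_path L u v -> forall N,
  Z.abs (phi N u - phi N v) <= (if strong then 1 else 2) * Z.of_nat L.
Proof.
  intros Hs L u v HP; induction HP; intros N.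
  - destruct H as [H|H]; subst.
    + rewrite Z.sub_diag; simpl. destruct strong; lia.
    + change (- fst v, - snd v) with (negv v). rewrite phi_neg, Z.sub_diag. destruct strong; simpl; lia.
  - specialize (IHHP N). pose proof (phi_lip strong u v Hs H N).
    rewrite Nat2Z.inj_succ. destruct strong; lia.
Qed.

Lemma pow_cancel k j w : act (mpow Mi k) (act (mpow M (k + j)) w) = act (mpow M j) w.
Proof.
  revert j; induction k; intros j.
  - simpl. rewrite act_mid; auto.
  - rewrite act_mpow_S. replace (S k + j)%nat with (k + S j)%nat by lia. rewrite IHk.
    rewrite act_mpow_S. apply MiM.
Qed.

Lemma phi_low w0 : 0 <= sg (act M w0) -> w0 <> (0,0) ->
  forall N, (1 <= N)%nat -> 2 * Z.of_nat N - 1 <= phi N (act (mpow M N) w0).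
Proof.
  intros H0 Hw N HN.
  assert (Hpos : forall j, act (mpow M j) w0 <> (0,0)).
  { intros j; apply act_nonzero; auto. apply detM_mpow; auto. }
  assert (G1 : forall j, 0 <= sg (act (mpow M (S j)) w0)).
  { intros j; induction j. simpl. rewrite act_mmul, act_mid. auto.
    rewrite act_mpow_S. pose proof (F1 _ IHj (Hpos _)). lia. }
  assert (G2 : forall j, 0 < sg (act (mpow M (S (S j))) w0)).
  { intros j. rewrite act_mpow_S. apply F1; auto. }
  assert (TK : forall k, (k < N)%nat -> 1 <= T k (act (mpow M N) w0)).
  { intros k Hk. unfold T. replace N with (k + (S (N - k - 1)))%nat at 1 by lia.
    rewrite pow_cancel. pose proof (G1 (N - k - 1)%nat).
    pose proof (tt_range (act (mpow M (S (N - k - 1))) w0)).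
    destruct (Z.eq_dec (tt (act (mpow M (S (N - k - 1))) w0)) 0) as [E|E]; [|lia].
    apply tt0 in E; lia. }
  assert (TK2 : forall k, (S k < N)%nat -> T k (act (mpow M N) w0) = 2).
  { intros k Hk. unfold T. replace N with (k + (S (S (N - k - 2))))%nat at 1 by lia.
    rewrite pow_cancel. apply tt2. apply G2. }
  assert (A : forall N', (N' < N)%nat -> 2 * Z.of_nat N' <= phi N' (act (mpow M N) w0)).
  { induction N'; intros HN'; cbn [phi]. lia.
    pose proof (IHN' ltac:(lia)). rewrite TK2 by lia. lia. }
  destruct N as [|N]. lia. cbn [phi].
  pose proof (A N ltac:(lia)). pose proof (TK N ltac:(lia)). lia.
Qed.

Lemma phi_start w0 : sg w0 <= 0 -> w0 <> (0,0) -> forall N, phi N w0 <= 1.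
Proof.
  intros H Hw.
  assert (T0 : T 0 w0 <= 1).
  { unfold T; simpl; rewrite act_mid. pose proof (tt_range w0).
    destruct (Z.eq_dec (tt w0) 2) as [E|E]; [apply tt2 in E; lia|lia]. }
  assert (TS : forall k, T (S k) w0 = 0).
  { induction k.
    - pose proof (T_range 1 w0). destruct (Z.eq_dec (T 1 w0) 0); auto.
      pose proof (T_shape 0 w0 Hw ltac:(lia)). lia.
    - pose proof (T_range (S (S k)) w0). destruct (Z.eq_dec (T (S (S k)) w0) 0); auto.
      pose proof (T_shape (S k) w0 Hw ltac:(lia)). lia. }
  assert (forall N, phi (S N) w0 = T 0 w0).
  { induction N; simpl in *. lia. rewrite IHN, TS. lia. }
  intros [|N]. simpl; lia. rewrite H0. auto.
Qed.
End Pot.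

Open Scope Z_scope.

Lemma mpow_conj g X N : detM X = 1 ->
  mpow (mmul (adj X) (mmul g X)) N = mmul (adj X) (mmul (mpow g N) X).
Proof.
  intros HX. induction N; simpl.
  - rewrite mmul_mid_l, adj_l; auto.
  - rewrite IHN. rewrite <- !mmul_assoc. f_equal. f_equal.
    rewrite (mmul_assoc X (adj X)), adj_r, mmul_mid_l; auto.
Qed.

Lemma LB (strong : bool) g X : detM g = 1 -> detM X = 1 ->
  posM (mmul (adj X) (mmul g X)) ->
  (strong = true -> let M := mmul (adj X) (mmul g X) in
     2 <= ma M /\ 2 <= mb M /\ 2 <= mc M /\ 2 <= md M) ->
  sg (act (adj X) e1) <= 0 ->
  0 <= sg (act (mmul (adj X) (mmul g X)) (act (adj X) e1)) ->
  forall N L, (1 <= N)%nat -> farey_path L e1 (act (mpow g N) e1) ->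
  2 * Z.of_nat N - 2 <= (if strong then 1 else 2) * Z.of_nat L.
Proof.
  intros Hg HX HM Hs H1 H2 N L HN HP.
  set (M := mmul (adj X) (mmul g X)) in *.
  assert (HdM : detM M = 1) by (unfold M; rewrite !detM_mmul, detM_adj, Hg, HX; ring).
  set (w0 := act (adj X) e1) in *.
  assert (Hw : w0 <> (0,0)).
  { apply act_nonzero. rewrite detM_adj; auto. unfold e1; congruence. }
  assert (HP' : farey_path L w0 (act (mpow M N) w0)).
  { replace (act (mpow M N) w0) with (act (adj X) (act (mpow g N) e1)).
    apply path_act; auto. rewrite detM_adj, HX; reflexivity.
    unfold M, w0. rewrite mpow_conj by auto. rewrite !act_mmul.
    rewrite <- (act_mmul X (adj X)), adj_r, act_mid; auto. }
  pose proof (phi_path M HM HdM strong Hs L _ _ HP' N) as Hp.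
  pose proof (phi_start M HM HdM w0 H1 Hw N).
  pose proof (phi_low M HM HdM w0 H2 Hw N HN).
  destruct strong; lia.
Qed.

Open Scope nat_scope.

Definition cnt (b : bool) (l : list bool) : nat := count_occ Bool.bool_dec l b.

Lemma cnt_app b l1 l2 : cnt b (l1 ++ l2) = cnt b l1 + cnt b l2.
Proof. unfold cnt. apply count_occ_app. Qed.

Lemma cnt_cons b c l : cnt b (c :: l) = (if Bool.eqb c b then 1 else 0) + cnt b l.
Proof. unfold cnt; simpl. destruct (bool_dec c b), c, b; simpl; congruence. Qed.

Lemma cnt_repeat b c a : cnt b (repeat c a) = if Bool.eqb c b then a else 0.
Proof. induction a; cbn [repeat]. destruct (Bool.eqb c b); auto. rewrite cnt_cons, IHa.
  destruct (Bool.eqb c b); lia. Qed.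

Lemma cnt_notin b l : ~ In b l -> cnt b l = 0.
Proof. unfold cnt. apply count_occ_not_In. Qed.

Lemma cnt_in b l : 1 <= cnt b l -> In b l.
Proof. unfold cnt. intros H. apply (count_occ_In Bool.bool_dec). lia. Qed.

Lemma runs (l : list bool) b : exists a rest, l = repeat b a ++ rest /\
  (rest = nil \/ exists r, rest = negb b :: r).
Proof.
  induction l as [|c l IH].
  - exists 0, nil; auto.
  - destruct (Bool.eqb c b) eqn:E.
    + apply Bool.eqb_prop in E; subst. destruct IH as [a [rest [H1 H2]]].
      exists (S a), rest. split; auto. simpl; congruence.
    + exists 0, (c :: l). split; auto. right. exists l. f_equal.
      destruct c, b; simpl in *; congruence.
Qed.

Lemma repeat_snoc (b : bool) a : b :: repeat b a = repeat b a ++ b :: nil.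
Proof. induction a; simpl; congruence. Qed.

Lemma rep_shift (b : bool) a l : b :: repeat b a ++ l = repeat b a ++ b :: l.
Proof. induction a; simpl; congruence. Qed.

Lemma not_in_all (c : bool) r : ~ In c r -> r = repeat (negb c) (length r).
Proof. induction r as [|x r IH]; simpl; intros H; auto.
  f_equal. destruct x, c; tauto. apply IH; tauto. Qed.

Lemma split_both w : 2 <= cnt true w -> 2 <= cnt false w ->
  exists x y p q, w = x ++ y /\ y ++ x = p ++ q /\
    In true p /\ In false p /\ In true q /\ In false q.
Proof.
  intros Ht Hf.
  destruct w as [|b w']. simpl in Ht; unfold cnt in Ht; simpl in Ht; lia.
  destruct (runs w' b) as [a [rest [E [Er|[r Er]]]]]; subst.
  - rewrite app_nil_r in *. rewrite cnt_cons, cnt_repeat in Ht, Hf.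
    destruct b; simpl in *; lia.
  - assert (Hb : In b (b :: nil)) by (simpl; auto).
    assert (Hnb : In (negb b) (b :: repeat b a ++ negb b :: nil)) by (simpl; right; apply in_or_app; simpl; auto).
    assert (Hb' : In b (b :: repeat b a ++ negb b :: nil)) by (simpl; auto).
    destruct (in_dec bool_dec true r) as [It|It]; destruct (in_dec bool_dec false r) as [If|If].
    + exists nil, (b :: repeat b a ++ negb b :: r), (b :: repeat b a ++ negb b :: nil), r.
      rewrite app_nil_r. split; auto. split. simpl. rewrite <- app_assoc. reflexivity.
      destruct b; simpl in *; repeat split; auto.
    +
      apply not_in_all in If. simpl in If.
      destruct b.
      *
        rewrite If in Hf. rewrite cnt_cons, cnt_app, cnt_repeat, cnt_cons, cnt_repeat in Hf. simpl in Hf. lia.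
      *
        rewrite If in Hf. rewrite cnt_cons, cnt_app, cnt_repeat, cnt_cons, cnt_repeat in Hf. simpl in Hf.
        rewrite If in Ht. rewrite cnt_cons, cnt_app, cnt_repeat, cnt_cons, cnt_repeat in Ht. simpl in Ht.
        destruct a as [|a']. lia.
        destruct r as [|z r']. simpl in Ht; lia.
        exists (repeat false (S a')), (false :: true :: z :: r'), (false :: true :: nil), (z :: r' ++ repeat false (S a')).
        split. apply rep_shift.
        split. reflexivity.
        assert (z = true) by (injection If; auto). subst z.
        simpl; repeat split; auto. right. apply in_or_app. right. simpl; auto.
    + apply not_in_all in It. simpl in It.
      destruct b.
      * rewrite It in Hf, Ht. rewrite cnt_cons, cnt_app, cnt_repeat, cnt_cons, cnt_repeat in Hf, Ht. simpl in Hf, Ht.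
        destruct a as [|a']. lia.
        destruct r as [|z r']. simpl in Hf; lia.
        exists (repeat true (S a')), (true :: false :: z :: r'), (true :: false :: nil), (z :: r' ++ repeat true (S a')).
        split. apply rep_shift.
        split. reflexivity.
        assert (z = false) by (injection It; auto). subst z.
        simpl; repeat split; auto. right. apply in_or_app. right. simpl; auto.
      * rewrite It in Ht. rewrite cnt_cons, cnt_app, cnt_repeat, cnt_cons, cnt_repeat in Ht. simpl in Ht. lia.
    + destruct r. 
      * destruct b; rewrite cnt_cons, cnt_app, cnt_repeat, cnt_cons in Ht, Hf; simpl in Ht, Hf; lia.
      * destruct b0; simpl in It, If; tauto.
Qed.

Open Scope Z_scope.

Definition dd (g : mat2) (j : nat) : nat := farey_dist infty (act (mpow g j) infty).

Lemma path_pow_v g v L : Z.abs (detM g) = 1 -> farey_path L v (act g v) ->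
  forall N, farey_path (N * L) v (act (mpow g N) v).
Proof.
  intros Hg HP N; induction N; simpl.
  - apply fp_nil. left. rewrite act_mid; reflexivity.
  - eapply path_app. exact HP. rewrite act_mmul. apply path_act; auto.
Qed.

Lemma sg_col A : nonnegM A -> 0 <= sg (act A e1).
Proof. destruct A as [a b c d]; unfold nonnegM, sg, act, e1; cbn -[Z.mul Z.add]. nia. Qed.
Lemma sg_adj A : nonnegM A -> sg (act (adj A) e1) <= 0.
Proof. destruct A as [a b c d]; unfold nonnegM, sg, act, adj, e1; cbn -[Z.mul Z.add Z.opp]. nia. Qed.

Lemma dd_upper w j : (dd (word_mat w) j <= j * length w)%nat /\
  farey_path (dd (word_mat w) j) e1 (act (mpow (word_mat w) j) e1).
Proof.
  destruct (path_word w) as [L [HL HP]].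
  assert (Hd : Z.abs (detM (word_mat w)) = 1) by (rewrite detM_word; reflexivity).
  pose proof (path_pow _ _ Hd HP j) as HP2.
  destruct (dist_spec _ _ _ HP2) as [A B]. unfold dd. change infty with e1. split; auto.
  pose proof (Nat.mul_le_mono_l _ _ j HL). lia.
Qed.

Lemma dd_weak w j : In true w -> In false w -> (1 <= j)%nat -> (j - 1 <= dd (word_mat w) j)%nat.
Proof.
  intros H1 H2 Hj. destruct (dd_upper w j) as [_ HP].
  assert (HX : detM mid = 1) by reflexivity.
  assert (Ea : adj mid = mid) by reflexivity.
  pose proof (LB false (word_mat w) mid (detM_word w) HX) as L.
  rewrite Ea, mmul_mid_r, mmul_mid_l in L.
  pose proof (nonneg_word w) as N.
  assert (Hs : sg (act mid e1) <= 0) by (unfold sg; simpl; lia).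
  assert (Hs2 : 0 <= sg (act (word_mat w) (act mid e1))).
  { rewrite act_mid. apply sg_col; auto. }
  specialize (L (pos_word w H1 H2) ltac:(discriminate) Hs Hs2 j _ Hj HP). lia.
Qed.

Lemma dd_strong w j : (2 <= cnt true w)%nat -> (2 <= cnt false w)%nat -> (1 <= j)%nat ->
  (2 * j - 2 <= dd (word_mat w) j)%nat.
Proof.
  intros H1 H2 Hj. destruct (dd_upper w j) as [_ HP].
  destruct (split_both w H1 H2) as [x [y [p [q [E1 [E2 [Pt [Pf [Qt Qf]]]]]]]]].
  set (X := word_mat x). set (Y := word_mat y).
  assert (HX : detM X = 1) by apply detM_word.
  assert (Hg : word_mat w = mmul X Y) by (rewrite E1; apply word_mat_app).
  assert (HM : mmul (adj X) (mmul (word_mat w) X) = word_mat (p ++ q)).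
  { rewrite <- E2, word_mat_app, Hg. fold X Y.
    rewrite mmul_assoc, mmul_assoc, adj_l, mmul_mid_l by auto. auto. }
  pose proof (LB true (word_mat w) X (detM_word w) HX) as L.
  rewrite HM in L.
  assert (Pp : posM (word_mat (p ++ q))) by (apply pos_word; apply in_or_app; auto).
  assert (P2 : let M := word_mat (p ++ q) in 2 <= ma M /\ 2 <= mb M /\ 2 <= mc M /\ 2 <= md M).
  { rewrite word_mat_app. apply pos2; apply pos_word; auto. }
  pose proof (nonneg_word x) as NX. pose proof (nonneg_word y) as NY. fold X Y in NX, NY.
  assert (Hs : sg (act (adj X) e1) <= 0).
  { apply sg_adj; auto. }
  assert (Hs2 : 0 <= sg (act (word_mat (p ++ q)) (act (adj X) e1))).
  { assert (E : act (word_mat (p ++ q)) (act (adj X) e1) = act Y e1).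
    { rewrite <- HM, !act_mmul. rewrite <- (act_mmul X (adj X)), adj_r, act_mid by auto.
      rewrite Hg, act_mmul, <- (act_mmul (adj X) X), adj_l, act_mid by auto. reflexivity. }
    rewrite E. apply sg_col; auto. }
  specialize (L Pp (fun _ => P2) Hs Hs2 j _ Hj HP). lia.
Qed.

Open Scope Z_scope.

Lemma wm_U m : word_mat (repeat true m) = M2 1 (Z.of_nat m) 0 1.
Proof. induction m; cbn -[Z.mul Z.add Z.sub Z.of_nat]. reflexivity. rewrite IHm. unfold mmul, letter, matU; cbn -[Z.mul Z.add Z.sub Z.of_nat].
  f_equal; lia. Qed.
Lemma wm_V n : word_mat (repeat false n) = M2 1 0 (Z.of_nat n) 1.
Proof. induction n; cbn -[Z.mul Z.add Z.sub Z.of_nat]. reflexivity. rewrite IHn. unfold mmul, letter, matV; cbn -[Z.mul Z.add Z.sub Z.of_nat].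
  f_equal; lia. Qed.

Lemma wm_UmVn m n : word_mat (UmVn m n) =
  M2 (1 + Z.of_nat m * Z.of_nat n) (Z.of_nat m) (Z.of_nat n) 1.
Proof. unfold UmVn. rewrite word_mat_app, wm_U, wm_V. unfold mmul; cbn -[Z.mul Z.add Z.sub Z.of_nat]. f_equal; lia. Qed.

Lemma dd_le_path g L : Z.abs (detM g) = 1 -> farey_path L e1 (act g e1) ->
  forall j, (dd g j <= j * L)%nat.
Proof. intros Hg HP j. pose proof (path_pow g L Hg HP j) as H.
  apply dist_spec in H. unfold dd; change infty with e1; lia. Qed.

Lemma dd_UmVn_2 m n j : (dd (word_mat (UmVn m n)) j <= 2 * j)%nat.
Proof.
  rewrite wm_UmVn. rewrite Nat.mul_comm. apply dd_le_path. unfold detM; cbn -[Z.mul Z.add Z.sub Z.of_nat]. f_equal; lia.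
  eapply fp_cons with (v := (Z.of_nat m, 1)). unfold farey_adj, e1; cbn -[Z.mul Z.add Z.sub Z.of_nat]. reflexivity.
  eapply fp_cons. 2: apply fp_nil; left; reflexivity.
  unfold farey_adj, act, e1; cbn -[Z.mul Z.add Z.sub Z.of_nat]. lia.
Qed.

Lemma dd_UmV1 m j : (dd (word_mat (UmVn m 1)) j <= j)%nat.
Proof.
  rewrite wm_UmVn. rewrite <- (Nat.mul_1_r j) at 2. apply dd_le_path. unfold detM; cbn -[Z.mul Z.add Z.sub Z.of_nat]. f_equal; lia.
  eapply fp_cons. 2: apply fp_nil; left; reflexivity.
  unfold farey_adj, act, e1; cbn -[Z.mul Z.add Z.sub Z.of_nat]. lia.
Qed.

Lemma dd_U1Vn n j : (dd (word_mat (UmVn 1 n)) j <= j + 2)%nat.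
Proof.
  rewrite wm_UmVn. set (g := M2 _ _ _ _).
  assert (Hg : Z.abs (detM g) = 1) by (unfold g, detM; cbn -[Z.mul Z.add Z.sub Z.of_nat]; f_equal; lia).
  set (v := (1, 1)).
  assert (A1 : farey_adj e1 v) by reflexivity.
  assert (A2 : farey_path 1 v (act g v)).
  { eapply fp_cons. 2: apply fp_nil; left; reflexivity. unfold farey_adj, act, g, v; cbn -[Z.mul Z.add Z.sub Z.of_nat]. lia. }
  pose proof (path_pow_v g v 1 Hg A2 j) as P.
  assert (P3 : farey_path 1 (act (mpow g j) v) (act (mpow g j) e1)).
  { apply path_act. rewrite detM_mpow. reflexivity. unfold g, detM; cbn -[Z.mul Z.add Z.sub Z.of_nat]; lia.
    eapply fp_cons. 2: apply fp_nil; left; reflexivity. unfold farey_adj, v, e1; cbn -[Z.mul Z.add Z.sub Z.of_nat]. reflexivity. }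
  assert (PP : farey_path (1 + (j * 1 + 1)) e1 (act (mpow g j) e1)).
  { eapply path_app. eapply fp_cons. exact A1. apply fp_nil; left; reflexivity.
    eapply path_app; eauto. }
  apply dist_spec in PP. unfold dd; change infty with e1. lia.
Qed.

Open Scope R_scope.

Lemma u_mul (d : nat -> nat) j : (1 <= j)%nat -> INR (d j) / INR j * INR j = INR (d j).
Proof. intros H. field. apply not_0_INR. lia. Qed.

Lemma INR_ge1 j : (1 <= j)%nat -> 1 <= INR j.
Proof. intros H. apply (le_INR 1). auto. Qed.

Lemma liminf_lower (d : nat -> nat) l c A :
  is_liminf (fun j => INR (d j) / INR j) l ->
  (forall j, (1 <= j)%nat -> c * INR j - A <= INR (d j)) -> c <= l.
Proof.
  intros [_ H2] Hd. destruct (Rle_or_lt c l) as [|Hlt]; auto. exfalso.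
  set (eps := (c - l) / 2).
  assert (He : 0 < eps) by (unfold eps; lra).
  destruct (INR_archimed eps A He) as [n Hn].
  destruct (H2 eps He (Nat.max n 1)) as [j [Hj Hu]].
  pose proof (u_mul d j ltac:(lia)). pose proof (Hd j ltac:(lia)).
  assert (INR n <= INR j) by (apply le_INR; lia).
  pose proof (INR_ge1 j ltac:(lia)).
  assert (INR (d j) < (l + eps) * INR j).
  { rewrite <- H. apply Rmult_lt_compat_r. lra. exact Hu. }
  unfold eps in *. nra.
Qed.

Lemma liminf_upper (d : nat -> nat) l c A :
  is_liminf (fun j => INR (d j) / INR j) l ->
  (forall j, (1 <= j)%nat -> INR (d j) <= c * INR j + A) -> l <= c.
Proof.
  intros [H1 _] Hd. destruct (Rle_or_lt l c) as [|Hlt]; auto. exfalso.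
  set (eps := (l - c) / 2).
  assert (He : 0 < eps) by (unfold eps; lra).
  destruct (INR_archimed eps (Rabs A) He) as [n Hn].
  destruct (H1 eps He) as [N HN].
  set (j := Nat.max (Nat.max N n) 1).
  specialize (HN j ltac:(unfold j; lia)).
  pose proof (u_mul d j ltac:(unfold j; lia)). pose proof (Hd j ltac:(unfold j; lia)).
  assert (INR n <= INR j) by (apply le_INR; unfold j; lia).
  pose proof (INR_ge1 j ltac:(unfold j; lia)).
  assert ((l - eps) * INR j < INR (d j)).
  { rewrite <- H. apply Rmult_lt_compat_r. lra. exact HN. }
  pose proof (Rle_abs A).
  unfold eps in *. nra.
Qed.

Lemma liminf_exists (d : nat -> nat) K :
  (forall j, (1 <= j)%nat -> (d j <= j * K)%nat) ->
  exists l, is_liminf (fun j => INR (d j) / INR j) l.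
Proof.
  intros Hd. destruct (Lim_seq.ex_LimInf_seq (fun j => INR (d j) / INR j)) as [l Hl].
  destruct l as [r| |]; simpl in Hl.
  - exists r. split.
    + intros eps He. destruct (Hl (mkposreal eps He)) as [_ [N HN]]. exists N. exact HN.
    + intros eps He N. destruct (Hl (mkposreal eps He)) as [A _]. apply A.
  - exfalso. destruct (Hl (INR K)) as [N HN].
    set (j := Nat.max N 1). specialize (HN j ltac:(unfold j; lia)).
    pose proof (u_mul d j ltac:(unfold j; lia)).
    pose proof (Hd j ltac:(unfold j; lia)).
    assert (INR (d j) <= INR j * INR K) by (rewrite <- mult_INR; apply le_INR; auto).
    pose proof (INR_ge1 j ltac:(unfold j; lia)).
    assert (INR K * INR j < INR (d j)).
    { rewrite <- H. apply Rmult_lt_compat_r. lra. exact HN. }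
    nra.
  - exfalso. destruct (Hl (-1) 1%nat) as [j [Hj Hu]].
    pose proof (u_mul d j Hj). pose proof (pos_INR (d j)). pose proof (INR_ge1 j Hj).
    assert (INR (d j) / INR j * INR j < -1 * INR j) by (apply Rmult_lt_compat_r; lra).
    nra.
Qed.

Lemma stable_spec w : is_liminf (fun j => INR (dd (word_mat w) j) / INR j)
  (stable_length (word_mat w)).
Proof.
  unfold stable_length, liminf. apply epsilon_spec.
  apply (liminf_exists _ (length w)). intros j _. apply dd_upper.
Qed.

Close Scope nat_scope. Close Scope Z_scope. Open Scope R_scope.

Lemma st_le_UmVn2 m n : stable_length (word_mat (UmVn m n)) <= 2.
Proof.
  apply (liminf_upper _ _ 2 0 (stable_spec (UmVn m n))).
  intros j _. pose proof (dd_UmVn_2 m n j). apply le_INR in H. rewrite mult_INR in H. replace (INR 2) with 2 in H by (simpl; lra). lra.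
Qed.

Lemma st_le_1 m n : (m = 1 \/ n = 1)%nat -> stable_length (word_mat (UmVn m n)) <= 1.
Proof.
  intros Hmn. apply (liminf_upper _ _ 1 2 (stable_spec (UmVn m n))).
  intros j _. destruct Hmn; subst.
  - pose proof (dd_U1Vn n j). apply le_INR in H. rewrite plus_INR in H. replace (INR 2) with 2 in H by (simpl; lra). lra.
  - pose proof (dd_UmV1 m j). apply le_INR in H. lra.
Qed.

Lemma st_ge_1 w : In true w -> In false w -> 1 <= stable_length (word_mat w).
Proof.
  intros H1 H2. apply (liminf_lower _ _ 1 1 (stable_spec w)).
  intros j Hj. pose proof (dd_weak w j H1 H2 Hj).
  assert (j <= dd (word_mat w) j + 1)%nat by lia. apply le_INR in H0.
  rewrite plus_INR in H0. replace (INR 2) with 2 in H0 by (simpl; lra). replace (INR 1) with 1 in H0 by (simpl; lra). lra.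
Qed.

Lemma st_ge_2 w : (2 <= cnt true w)%nat -> (2 <= cnt false w)%nat -> 2 <= stable_length (word_mat w).
Proof.
  intros H1 H2. apply (liminf_lower _ _ 2 2 (stable_spec w)).
  intros j Hj. pose proof (dd_strong w j H1 H2 Hj).
  assert (2 * j <= dd (word_mat w) j + 2)%nat by lia. apply le_INR in H0.
  rewrite plus_INR, mult_INR in H0. replace (INR 2) with 2 in H0 by (simpl; lra). replace (INR 1) with 1 in H0 by (simpl; lra). lra.
Qed.

Theorem mainTheorem10 (m n : nat) (hm : (1 <= m)%nat) (hn : (1 <= n)%nat) :
  (forall w : list bool, numU w = m -> numV w = n ->
     stable_length (word_mat (UmVn m n)) <= stable_length (word_mat w)) /\
  stable_length (word_mat (UmVn m n)) <= 2.
Proof.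
  split; [|apply st_le_UmVn2].
  intros w Hu Hv.
  change (numU w) with (cnt true w) in Hu. change (numV w) with (cnt false w) in Hv.
  destruct (Nat.eq_dec m 1) as [E|E]; [|destruct (Nat.eq_dec n 1) as [F|F]].
  - apply Rle_trans with 1. apply st_le_1; auto.
    apply st_ge_1; apply cnt_in; lia.
  - apply Rle_trans with 1. apply st_le_1; auto.
    apply st_ge_1; apply cnt_in; lia.
  - apply Rle_trans with 2. apply st_le_UmVn2. apply st_ge_2; lia.
Qed.
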